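(* Let $\mathbf{x}_1,\ldots,\mathbf{x}_n\in\mathbb{R}^d$ be nonzero column vectors and $y_1,\ldots,y_n\in\mathbb{R}$. Let $\mathbf{T}\in\mathbb{R}^{n\times n}$ be the upper triangular matrix with $\mathbf{T}_{ik}=\mathbf{x}_i^\top\mathbf{x}_k$ for $i\le k$ and $0$ otherwise, let $\mathbf{a}^*=(a_1^*,\ldots,a_n^* )$ be the unique row vector with $(y_1,\ldots,y_n)=\mathbf{a}^*\mathbf{T}$, and set $\mathbf{w}_j^*=\sum_{i=1}^j a_i^*\mathbf{x}_i^\top\in\mathbb{R}^{1\times d}$ for $j=1,\ldots,n$. For $j=1,\ldots,n-1$ define the online loss $L_j(\mathbf{w})=\frac12(\mathbf{w}\mathbf{x}_{j+1}-y_{j+1})^2$, with gradient $\nabla_{\mathbf{w}}L_j(\mathbf{w})=(\mathbf{w}\mathbf{x}_{j+1}-y_{j+1})\mathbf{x}_{j+1}^\top$. Then for every $j=1,\ldots,n-1$, $$\mathbf{w}_{j+1}^*=\mathbf{w}_j^*-\frac{1}{\|\mathbf{x}_{j+1}\|_2^2}\nabla_{\mathbf{w}}L_j(\mathbf{w}_j^* ).$$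
   Context: Weight vectors are $1\times d$ row vectors and inputs are $d\times 1$ column vectors. The vectors $\mathbf{w}_j^*$ are the stationary points of the per-position weight iteration $\mathbf{w}_j^{(l)}=\mathbf{w}_j^{(l-1)}+\frac{\eta}{n}\sum_{i=1}^j(y_i-\mathbf{w}_i^{(l-1)}\mathbf{x}_i)\mathbf{x}_i^\top$ (with $\mathbf{w}_j^{(0)}=0$) associated with a multi-layer causal linear self-attention in-context learner. *)

(* Defs.v *)
From mathcomp Require Import all_boot all_order all_algebra.
Set Implicit Arguments. Unset Strict Implicit. Unset Printing Implicit Defensive.
Import Order.TTheory GRing.Theory Num.Theory.
Local Open Scope ring_scope.

(* Vectors x_i in R^d are columns 'cV[R]_d; weights are rows 'rV[R]_d.
   Indices 1..n of the paper are the ordinals 'I_n (0-based). *)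

Definition dotc (R : realFieldType) (d : nat) (u v : 'cV[R]_d) : R :=
  (u^T *m v) ord0 ord0.

Definition Tmat (R : realFieldType) (n d : nat) (x : 'I_n -> 'cV[R]_d) : 'M[R]_n :=
  \matrix_(i < n, k < n) (if (i <= k)%N then dotc (x i) (x k) else 0).

Definition yrow (R : realFieldType) (n : nat) (y : 'I_n -> R) : 'rV[R]_n :=
  \row_(i < n) y i.

Definition wstar (R : realFieldType) (n d : nat) (x : 'I_n -> 'cV[R]_d)
    (a : 'rV[R]_n) (j : 'I_n) : 'rV[R]_d :=
  \sum_(i < n | (i <= j)%N) a ord0 i *: (x i)^T.

Definition online_loss (R : realFieldType) (d : nat) (xn : 'cV[R]_d) (yn : R)
    (w : 'rV[R]_d) : R :=
  2^-1 * ((w *m xn) ord0 ord0 - yn) ^+ 2.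

Definition online_grad (R : realFieldType) (d : nat) (xn : 'cV[R]_d) (yn : R)
    (w : 'rV[R]_d) : 'rV[R]_d :=
  ((w *m xn) ord0 ord0 - yn) *: xn^T.

(* Main.v *)
Require Import Defs.
From mathcomp Require Import all_boot all_order all_algebra.
Import Order.TTheory GRing.Theory Num.Theory.
Local Open Scope ring_scope.

Theorem proposition5 (R : realFieldType) (n d : nat)
    (x : 'I_n -> 'cV[R]_d) (y : 'I_n -> R) (astar : 'rV[R]_n) :
  (forall i, x i != 0) ->
  yrow y = astar *m Tmat x ->
  forall j j1 : 'I_n, val j1 = (val j).+1 ->
    wstar x astar j1 =
      wstar x astar j - (dotc (x j1) (x j1))^-1 *:
        online_grad (x j1) (y j1) (wstar x astar j).
Proof.
move=> nz hy j j1 hj.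
have wsplit : wstar x astar j1 = wstar x astar j + astar ord0 j1 *: (x j1)^T.
  rewrite /wstar (bigD1 j1) //= addrC; congr (_ + _).
  by apply: eq_bigl => i; rewrite andbC -val_eqE /= -ltn_neqAle hj ltnS.
have W : (wstar x astar j *m x j1) ord0 ord0
    = \sum_(i < n | (i <= j)%N) astar ord0 i * dotc (x i) (x j1).
  rewrite /wstar mulmx_suml summxE; apply: eq_bigr => i _.
  by rewrite -scalemxAl mxE.
have Y : y j1 = (wstar x astar j *m x j1) ord0 ord0
              + astar ord0 j1 * dotc (x j1) (x j1).
  rewrite W.
  have := congr1 (fun M : 'rV[R]_n => M ord0 j1) hy.
  rewrite /yrow !mxE /= => ->.
  rewrite (bigID (fun i : 'I_n => (i <= j1)%N)) /=.
  rewrite [X in _ + X]big1 ?addr0; last first.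
    by move=> i /negbTE h; rewrite mxE h mulr0.
  rewrite (bigD1 j1) //= addrC; congr (_ + _); last by rewrite mxE leqnn.
  rewrite big_mkcondr big_mkcond [RHS]big_mkcond /=; apply: eq_bigr => i _.
  rewrite mxE -val_eqE /= hj.
  case: (leqP i j) => hij.
    by rewrite (leq_trans hij (leqnSn _)) (ltn_eqF (leq_ltn_trans hij (ltnSn _))) ?hij /=.

  case: leqP => h2 //.
  by have -> : (nat_of_ord i == (val j).+1) by rewrite eqn_leq h2 hij.
have c0 : dotc (x j1) (x j1) != 0.
  rewrite /dotc mxE.
  have : x j1 != 0 := nz j1.
  apply: contra => /eqP h.
  have hs : forall k : 'I_d, 0 <= (x j1)^T ord0 k * x j1 k ord0.
    by move=> k; rewrite mxE -expr2 sqr_ge0.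
  apply/eqP/matrixP => k l; rewrite (ord1 l) mxE.
  move/eqP: h; rewrite psumr_eq0; last by move=> i _; exact: hs.
  move/allP => /(_ k (mem_index_enum k)) /=.
  by rewrite mxE -expr2 sqrf_eq0 => /eqP.
rewrite wsplit /online_grad Y.
set c := dotc _ _; set Wv := (_ *m _) ord0 ord0.
rewrite scalerA.
have -> : c^-1 * (Wv - (Wv + astar ord0 j1 * c)) = - astar ord0 j1.
  by rewrite opprD addrA subrr add0r mulrN mulrCA mulVf // mulr1.
by rewrite scaleNr opprK.
Qed.
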